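(* Let $\boldsymbol\alpha=(\alpha_i(\theta_b))_{1\le i\le k,1\le b\le B}$ be a fixed static allocation in the setting described in the context. Then for every $b\in\{1,\dots,B\}$ and every solution $i\neq i^b$, $$\liminf_{n\to\infty}-\frac1n\log \mathrm{P}\left(m^n_{i,b}=1\right)\;\ge\; G_i(\theta_b),$$ where $m^n_{i,b}=\mathbf 1\{i=i^b_n\}$.
   Context: There are $k\ge2$ solutions and $B$ parameter values $\theta_1,\dots,\theta_B$ with probabilities $p_1,\dots,p_B\ge 0$, $\sum_b p_b=1$. For each $i,b$, $y_i(\theta_b)\in\mathbb R$ is the (unknown) mean simulation output of solution $i$ at $\theta_b$. For each $b$ the conditional optimum $i^b=\arg\min_{1\le i\le k}y_i(\theta_b)$ is assumed unique. Simulation outputs $Y_{i1}(\theta_b),Y_{i2}(\theta_b),\dots$ at pair $(i,\theta_b)$ are i.i.d. $N(y_i(\theta_b),\lambda_i^2(\theta_b))$ with known $\lambda_i(\theta_b)>0$, independent across pairs. A static allocation is a vector $\boldsymbol\alpha$ with $\alpha_i(\theta_b)\ge0$ and $\sum_{i,b}\alpha_i(\theta_b)=1$; given $\boldsymbol\alpha$, after a total budget $n$ the pair $(i,\theta_b)$ has received $N_i^n(\theta_b)$ replications, where $N_i^n(\theta_b)/n\to\alpha_i(\theta_b)$ and $N_i^n(\theta_b)\to\infty$ as $n\to\infty$ (even if $\alpha_i(\theta_b)=0$). Let $\mu_{i,n}(\theta_b)$ be the sample mean of the $N_i^n(\theta_b)$ outputs at $(i,\theta_b)$ and $i^b_n=\arg\min_i\mu_{i,n}(\theta_b)$.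 For $i\ne i^b$ define $$G_i(\theta_b)=\frac{(y_i(\theta_b)-y_{i^b}(\theta_b))^2}{2\left(\lambda_i^2(\theta_b)/\alpha_i(\theta_b)+\lambda_{i^b}^2(\theta_b)/\alpha_{i^b}(\theta_b)\right)},$$ with $G_i(\theta_b)=0$ if $\alpha_i(\theta_b)=0$ or $\alpha_{i^b}(\theta_b)=0$. *)

(* Defs.v *)
From HB Require Import structures.
From mathcomp Require Import all_boot all_order all_algebra.
From mathcomp Require Import all_classical all_reals all_analysis.
Set Implicit Arguments. Unset Strict Implicit. Unset Printing Implicit Defensive.
Import Order.TTheory GRing.Theory Num.Theory.
Local Open Scope classical_set_scope.
Local Open Scope ring_scope.

Definition mutually_independent (I : eqType) d (T : measurableType d)
    (R : realType) (P : probability T R) (X : I -> T -> R) : Prop :=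
  forall (J : seq I) (A : I -> set R),
    uniq J -> (forall t, t \in J -> measurable (A t)) ->
    P (\big[setI/setT]_(t <- J) (X t @^-1` A t)) =
    (\prod_(t <- J) P (X t @^-1` A t))%E.

Definition sample_mean (T : Type) (R : realType) (Yr : nat -> T -> R) (N : nat)
    (w : T) : R :=
  (\sum_(r < N) Yr r w) / N%:R.

(* The rate function G_i(theta_b) of the paper (with the convention that it
   is 0 when one of the two allocations is 0). [ib] is the conditional
   optimum i^b. *)
Definition Grate (R : realType) (k B : nat) (y lam alpha : 'I_k -> 'I_B -> R)
    (ib : 'I_k) (i : 'I_k) (b : 'I_B) : R :=
  if (alpha i b == 0) || (alpha ib b == 0) then 0
  else (y i b - y ib b) ^+ 2 /
       (2 * (lam i b ^+ 2 / alpha i b + lam ib b ^+ 2 / alpha ib b)).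

Definition neglog (R : realType) (x : R) : \bar R :=
  if x == 0 then +oo%E else (- ln x)%:E.

Definition rate_seq (R : realType) (p : nat -> \bar R) : (\bar R)^nat :=
  fun n => (((n%:R)^-1)%:E * neglog (fine (p n)))%E.

(* Main.v *)
Require Import Defs.
From HB Require Import structures.
From mathcomp Require Import all_boot all_order all_algebra.
From mathcomp Require Import all_classical all_reals all_analysis.
Import Order.TTheory GRing.Theory Num.Theory numFieldNormedType.Exports.
From mathcomp Require Import measurable_realfun normal_distribution.
From mathcomp Require Import ring lra.
Import HBNNSimple.
Local Open Scope classical_set_scope.
Local Open Scope ring_scope.
Lemma indic_preimage (T R: Type) (S : pzRingType) (X : T -> R) (A : set R) x :
  (\1_A (X x) : S) = \1_(X @^-1` A) x.
Proof. by rewrite /indic /preimage. Qed.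

Lemma indic_int d (T : measurableType d) (R : realType) (m : {measure set T -> \bar R})
  (g : T -> R) (A : set T) (mA : measurable A) :
  (\int[m]_x (\1_A x * g x)%:E = \int[m]_(x in A) (g x)%:E)%E.
Proof.
rewrite [RHS]integral_mkcond epatch_indic; apply: eq_integral => x _ /=.
by rewrite EFinM muleC.
Qed.

Lemma push_density d (T : measurableType d) d2 (T2 : measurableType d2) (R : realType)
  (m1 : {measure set T -> \bar R}) (m2 : {measure set T2 -> \bar R})
  (X : T -> R) (mX : measurable_fun setT X)
  (X2 : T2 -> R) (mX2 : measurable_fun setT X2)
  (g : T2 -> R) (g0 : forall x, 0 <= g x) (mg : measurable_fun setT g) (c : R)
  (h : forall B, measurable B ->
     (c%:E * m1 (X @^-1` B) = \int[m2]_(x in X2 @^-1` B) (g x)%:E)%E)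
  (f : R -> R) (f0 : forall x, 0 <= f x) (mf : measurable_fun setT f) :
  (c%:E * \int[m1]_x (f (X x))%:E = \int[m2]_x (f (X2 x) * g x)%:E)%E.
Proof.
have mfE : measurable_fun (T:=R) (U:=\bar R) [set: R] (EFin \o f) by apply/measurable_EFinP.
set h_ := nnsfun_approx measurableT mfE.
have cv y : (fun n => (h_ n y)%:E) @ \oo --> (f y)%:E.
  have f0E : forall x, setT x -> (0 <= (EFin \o f) x)%E by move=> x _; rewrite /= lee_fin.
  by have := cvg_nnsfun_approx measurableT mfE f0E (Logic.I : setT y).
have nd y : {homo (fun n => h_ n y) : n m / (n <= m)%N >-> n <= m}.
  by move=> n m nm; exact/lefP/nd_nnsfun_approx.
have mh n : measurable_fun setT (h_ n) by exact: measurable_funPT.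
have E1 : (\int[m1]_x (f (X x))%:E = limn (fun n => \int[m1]_x (h_ n (X x))%:E))%E.
  rewrite -monotone_convergence //.
  - by apply: eq_integral => x _; apply/esym/cvg_lim => //; exact: cv.
  - by move=> n; apply/measurable_EFinP; exact: measurableT_comp.
  - by move=> n x _; rewrite lee_fin.
  - by move=> x _ a b ab; rewrite lee_fin; exact: nd.
have E2 : (\int[m2]_x (f (X2 x) * g x)%:E =
     limn (fun n => \int[m2]_x (h_ n (X2 x) * g x)%:E))%E.
  rewrite -monotone_convergence //.
  - apply: eq_integral => x _; apply/esym/cvg_lim => //.
    under eq_fun do rewrite EFinM.
    by rewrite EFinM; apply: cvgeZr => //; exact: cv.
  - move=> n; apply/measurable_EFinP; apply: measurable_funM => //.
    exact: measurableT_comp.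
  - by move=> n x _; rewrite lee_fin mulr_ge0.
  - by move=> x _ a b ab; rewrite lee_fin ler_wpM2r //; exact: nd.
rewrite E1 E2 -limeMl //; last first.
  apply: ereal_nondecreasing_is_cvgn => a b ab; apply: ge0_le_integral => //=.
  all: try (by move=> x _; rewrite lee_fin).
  - by apply/measurable_EFinP; apply: measurableT_comp.
  - by apply/measurable_EFinP; apply: measurableT_comp.
  - by move=> x _; rewrite lee_fin; exact: nd.
have mi n r : measurable (h_ n @^-1` [set r]) by exact: measurable_funPTI.
have mXi n r : measurable (X @^-1` (h_ n @^-1` [set r])).
  by rewrite -[X @^-1` _]setTI; exact: mX.
have mX2i n r : measurable (X2 @^-1` (h_ n @^-1` [set r])).
  by rewrite -[X2 @^-1` _]setTI; exact: mX2.
have nn n r y : 0 <= r * \1_(h_ n @^-1` [set r]) y.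
  by have := nnfun_muleindic_ge0 (h_ n) r y; rewrite -EFinM lee_fin.
suff key n : (c%:E * \int[m1]_x (h_ n (X x))%:E = \int[m2]_x (h_ n (X2 x) * g x)%:E)%E.
  by under eq_fun do rewrite key.
transitivity (c%:E * \int[m1]_x (\sum_(r \in range (h_ n)) (r * \1_(h_ n @^-1` [set r]) (X x))%:E))%E.
  by congr (_ * _)%E; apply: eq_integral => x _; rewrite fimfunE -fsumEFin.
rewrite ge0_integral_fsum //; last 2 first.
  - move=> r; apply/measurable_EFinP; apply: measurable_funM => //.
    exact: measurableT_comp.
  - by move=> r x _; rewrite lee_fin; exact: nn.
rewrite ge0_mule_fsumr; last first.
  by move=> r; apply: integral_ge0 => x _; rewrite lee_fin.
transitivity (\int[m2]_x (\sum_(r \in range (h_ n)) (r * \1_(h_ n @^-1` [set r]) (X2 x) * g x)%:E))%E; last first.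
  apply: eq_integral => x _; rewrite EFinM fimfunE -fsumEFin // ge0_mule_fsuml.
    by apply: eq_fsbigr => r _; rewrite EFinM.
  by move=> r; rewrite lee_fin; exact: nn.
rewrite ge0_integral_fsum //; last 2 first.
  - move=> r; apply/measurable_EFinP; apply: measurable_funM => //.
    apply: measurable_funM => //; exact: measurableT_comp.
  - by move=> r x _; rewrite lee_fin mulr_ge0.
apply: eq_fsbigr => r _.
case: (leP 0 r) => r0.
  under eq_integral do rewrite EFinM.
  rewrite ge0_integralZl //; try (by apply/measurable_EFinP; exact: measurableT_comp);
    try (by move=> x _; rewrite lee_fin).
  under [RHS]eq_integral do rewrite -mulrA EFinM.
  rewrite ge0_integralZl //; try (by apply/measurable_EFinP; apply: measurable_funM => //;
      exact: measurableT_comp);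
    try (by move=> x _; rewrite lee_fin mulr_ge0).
  rewrite (@eq_integral _ _ _ m2 _ (fun x => (\1_(X2 @^-1` (h_ n @^-1` [set r])) x * g x)%:E));
    last by move=> x _; rewrite indic_preimage.
  rewrite (@eq_integral _ _ _ m1 _ (fun x => (\1_(X @^-1` (h_ n @^-1` [set r])) x)%:E));
    last by move=> x _; rewrite indic_preimage.
  rewrite indic_int // -h //.
  by rewrite integral_indic // setIT muleCA.
have z y : \1_(h_ n @^-1` [set r]) y = 0 :> R.
  rewrite indicE memNset //= => hr.
  have : 0 <= h_ n y by apply: fun_ge0.
  by rewrite hr leNgt r0.
under eq_integral do rewrite z mulr0.
under [RHS]eq_integral do rewrite z mulr0 mul0r.
by rewrite !integral0_eq // mule0.
Qed.

Lemma pdf_shift (R : realType) (m s u x : R) (s0 : s != 0) :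
  expR (u * x) * normal_pdf m s x =
  expR (u * m + u ^+ 2 * s ^+ 2 / 2) * normal_pdf (m + u * s ^+ 2) s x.
Proof.
rewrite /normal_pdf (negbTE s0) /normal_fun.
rewrite mulrCA -expRD [RHS]mulrCA -expRD; congr (_ * expR _).
have s2 : s ^+ 2 != 0 by rewrite expf_neq0.
field; rewrite ?s2 //.
Qed.

Lemma normal_mgf (R : realType) (m s u : R) (s0 : s != 0) :
  (\int[lebesgue_measure]_x (expR (u * x) * normal_pdf m s x)%:E =
   (expR (u * m + u ^+ 2 * s ^+ 2 / 2))%:E)%E.
Proof.
under eq_integral do rewrite pdf_shift // EFinM.
rewrite integralZl //; first by rewrite integral_normal_pdf mule1.
exact: integrable_normal_pdf.
Qed.

Lemma mgf_Y d (T : measurableType d) (R : realType) (P : probability T R)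
  (Y : T -> R) (mY : measurable_fun setT Y) (m s : R) (s0 : s != 0)
  (hY : forall A, measurable A -> P (Y @^-1` A) = normal_prob m s A) (u : R) :
  (\int[P]_x (expR (u * Y x))%:E = (expR (u * m + u ^+ 2 * s ^+ 2 / 2))%:E)%E.
Proof.
rewrite -[LHS]mul1e.
rewrite (@push_density _ _ _ _ _ P lebesgue_measure Y mY id (@measurable_id _ _ setT)
  (normal_pdf m s) (normal_pdf_ge0 m s) (measurable_normal_pdf m s) 1 _ (fun y => expR (u * y))).
- exact: normal_mgf.
- by move=> B mB; rewrite mul1e; exact: (hY B mB).
- by move=> x; exact: expR_ge0.
- apply: measurableT_comp => //; exact: measurable_funM.
Qed.

Lemma meas_prod d (T : measurableType d) (R : realType) (I : Type) (J : seq I)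
  (F : I -> T -> R) (mF : forall t, measurable_fun setT (F t)) :
  measurable_fun setT (fun x => \prod_(t <- J) F t x).
Proof.
elim: J => [|t J IH].
  by under eq_fun do rewrite big_nil; exact: measurable_cst.
under eq_fun do rewrite big_cons.
exact: measurable_funM.
Qed.

Lemma prod_indic (T : Type) (R : pzRingType) (I : Type) (J : seq I) (X : I -> T -> R)
  (A : I -> set R) x :
  \prod_(t <- J) \1_(A t) (X t x) = \1_(\big[setI/setT]_(t <- J) (X t @^-1` A t)) x :> R.
Proof.
elim: J => [|t J IH]; first by rewrite !big_nil indicT.
by rewrite !big_cons IH indicI.
Qed.

Lemma indep_prod d (T : measurableType d) (R : realType) (P : probability T R)
  (I : eqType) (X : I -> T -> R) (mX : forall t, measurable_fun setT (X t))
  (hind : mutually_independent P X)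
  (f : I -> R -> R) (f0 : forall t x, 0 <= f t x) (mf : forall t, measurable_fun setT (f t))
  (hfin : forall t, (\int[P]_x (f t (X t x))%:E)%E \is a fin_num) :
  forall (J1 J2 : seq I) (A : I -> set R), uniq (J1 ++ J2) -> (forall t, measurable (A t)) ->
  (\int[P]_x ((\prod_(t <- J1) f t (X t x)) * \prod_(t <- J2) \1_(A t) (X t x))%:E =
   (\prod_(t <- J1) \int[P]_x (f t (X t x))%:E) * \prod_(t <- J2) P (X t @^-1` A t))%E.
Proof.
have mXA (t : I) (B : set R) : measurable B -> measurable (X t @^-1` B).
  by move=> mB; rewrite -[X t @^-1` _]setTI; exact: mX.
elim=> [|t0 J1 IH] J2 A uJ mA.
  rewrite big_nil mul1e.
  under eq_integral do rewrite big_nil mul1r prod_indic.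
  rewrite integral_indic //; last first.
    by apply: bigsetI_measurable => t _; exact: mXA.
  by rewrite setIT; apply: hind.
move: uJ; rewrite cat_cons /= => /andP[t0J uJ].
set H := fun x => (\prod_(t <- J1) f t (X t x)) * \prod_(t <- J2) \1_(A t) (X t x).
have mH : measurable_fun setT H.
  apply: measurable_funM; apply: meas_prod => t //; first exact: measurableT_comp.
  apply: measurableT_comp => //; exact/measurable_indicP.
have H0 x : 0 <= H x.
  by apply: mulr_ge0; apply: prodr_ge0 => t _.
set a := (\prod_(t <- J1) \int[P]_x (f t (X t x))%:E)%E.
set b := (\prod_(t <- J2) P (X t @^-1` A t))%E.
have afin : a \is a fin_num.
  rewrite /a; elim: J1 {IH t0J uJ H mH H0 a} => [|t J IH']; first by rewrite big_nil.
  by rewrite big_cons fin_numM.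
have bfin : b \is a fin_num.
  rewrite /b; elim: J2 {IH t0J uJ H mH H0 a afin b} => [|t J IH']; first by rewrite big_nil.
  by rewrite big_cons fin_numM // fin_num_measure //; exact: mXA.
have key := @push_density _ _ _ _ _ P P (X t0) (mX t0) (X t0) (mX t0) H H0 mH (fine (a * b)).
rewrite fineK ?fin_numM // in key.
under eq_integral do rewrite big_cons -mulrA.
rewrite -(key _ (f t0)) //; last first.
  move=> B mB; rewrite -indic_int; last exact: mXA.
  under eq_integral do rewrite -indic_preimage /H mulrCA.
  pose A' := fun t => if t == t0 then B else A t.
  have uJ' : uniq (J1 ++ t0 :: J2).
    have /permPl pe := perm_catCA J1 [:: t0] J2.
    by rewrite -cat1s (perm_uniq pe) /= t0J.
  have eA t : t \in J2 -> A' t = A t.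
    move=> tJ; rewrite /A'; case: eqP => // e.
    by move: t0J; rewrite mem_cat -e tJ orbT.
  have A'eq : A' t0 = B by rewrite /A' eqxx.
  have p1 x : \prod_(t <- J2) \1_(A' t) (X t x) = \prod_(t <- J2) \1_(A t) (X t x) :> R.
    by apply: eq_big_seq => t /eA ->.
  have p2 : (\prod_(t <- J2) P (X t @^-1` A' t) = b)%E.
    by apply: eq_big_seq => t /eA ->.
  transitivity (\int[P]_x (\prod_(t <- J1) f t (X t x) * \prod_(t <- t0 :: J2) \1_(A' t) (X t x))%:E)%E; last first.
    by apply: eq_integral => x _; rewrite big_cons A'eq p1.
  rewrite IH //; last by move=> t; rewrite /A'; case: eqP.
  rewrite big_cons A'eq p2 -muleA; congr (_ * _)%E; exact: muleC.
by rewrite big_cons -/a [LHS]muleC muleA.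
Qed.
Lemma einf_ge (R : realType) (u w : (\bar R)^nat) (l : \bar R) :
  w @ \oo --> l -> (\forall n \near \oo, w n <= u n)%E -> (l <= limn_einf u)%E.
Proof.
move=> wl [N _ hN].
rewrite limn_einf_lim -(cvg_lim _ (cvg_einfs wl)) //.
apply: lee_lim; [exact: is_cvg_einfs | exact: is_cvg_einfs |].
exists N => // n /= Nn.
apply: le_ereal_inf_tmp => _ [m /= nm <-].
apply: (le_trans _ (hN m _)); last by apply: leq_trans Nn nm.
by apply: ereal_inf_lbound; exists m.
Qed.

Lemma prod_iota_const (R : comPzSemiRingType) (N : nat) (c : R) :
  \prod_(r <- iota 0 N) c = c ^+ N.
Proof. by have := prodr_const_nat 0 N c; rewrite subn0 /index_iota subn0. Qed.

Lemma sum_iota (R : nmodType) (N : nat) (F : nat -> R) :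
  \sum_(r <- iota 0 N) F r = \sum_(r < N) F r.
Proof. by rewrite -(big_mkord xpredT) /index_iota subn0. Qed.

Lemma chernoff d (T : measurableType d) (R : realType) (P : probability T R) (k B : nat)
  (y lam : 'I_k -> 'I_B -> R) (hlam : forall i b, 0 < lam i b)
  (Y : 'I_k -> 'I_B -> nat -> T -> R)
  (hYmeas : forall i b r, measurable_fun setT (Y i b r))
  (hYnorm : forall i b r (A : set R), measurable A ->
     P (Y i b r @^-1` A) = normal_prob (y i b) (lam i b) A)
  (hYind : mutually_independent P (fun t : 'I_k * 'I_B * nat => Y t.1.1 t.1.2 t.2))
  (b : 'I_B) (i j : 'I_k) (hij : i != j) (Ni Nj : nat) (Ni0 : (0 < Ni)%N) (Nj0 : (0 < Nj)%N)
  (t : R) (t0 : 0 <= t) :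
  (P [set w | (sample_mean (Y i b) Ni w <= sample_mean (Y j b) Nj w)%R] <=
   (expR (- t * (y i b - y j b) + t ^+ 2 * (lam i b ^+ 2 / Ni%:R + lam j b ^+ 2 / Nj%:R) / 2))%:E)%E.
Proof.
set mi := sample_mean (Y i b) Ni; set mj := sample_mean (Y j b) Nj.
have mm (i' : 'I_k) N : measurable_fun setT (sample_mean (Y i' b) N).
  rewrite /sample_mean; apply: measurable_funM => //; exact: measurable_sum.
have -> : [set w | (mi w <= mj w)%R] = (fun w => mi w - mj w) @^-1` `]-oo, 0].
  by apply/seteqP; split => w /=; rewrite in_itv /= subr_le0.
set S := _ @^-1` _.
have mS : measurable S.
  by rewrite -[S]setTI; apply: measurable_funB => //; exact: mm.
rewrite -[S in P S]setIT -integral_indic //.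
apply: (@le_trans _ _ (\int[P]_x (expR (- t * (mi x - mj x)))%:E)%E).
  apply: ge0_le_integral => //.
  - by apply/measurable_EFinP; exact/measurable_indicP.
  - apply/measurable_EFinP; apply: measurableT_comp => //.
    apply: measurable_funM => //; apply: measurable_funB => //; exact: mm.
  - move=> x _; rewrite lee_fin indicE; case: (boolP (x \in S)) => hx.
      rewrite -expR0 ler_expR /=.
      move: hx; rewrite inE /S /= in_itv /= => hx.
      by rewrite mulNr oppr_ge0 mulr_ge0_le0.
    by rewrite expR_ge0.
pose X := fun tau : 'I_k * 'I_B * nat => Y tau.1.1 tau.1.2 tau.2.
pose f := fun (tau : 'I_k * 'I_B * nat) (x : R) =>
  if tau.1.1 == i then expR (- (t / Ni%:R) * x) else expR (t / Nj%:R * x).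
pose J := [seq (i, b, r) | r <- iota 0 Ni] ++ [seq (j, b, r) | r <- iota 0 Nj].
have hji : (j == i) = false by rewrite eq_sym (negbTE hij).
have ident x : expR (- t * (mi x - mj x)) =
    \prod_(tau <- J) f tau (X tau x) * \prod_(tau <- [::]) \1_(setT : set R) (X tau x).
  rewrite big_nil mulr1 big_cat !big_map /= /f /= eqxx hji.
  rewrite -!expR_sum -expRD; congr expR.
  rewrite /mi /mj /sample_mean !sum_iota -!mulr_sumr.
  ring.
have lam0 i' b' : lam i' b' != 0 by apply/negbT/gt_eqF/hlam.
have mf tau : measurable_fun setT (f tau).
  by rewrite /f; case: eqP => _; apply: measurableT_comp => //; exact: measurable_funM.
have f0 tau x : 0 <= f tau x by rewrite /f; case: ifP => _; exact: expR_ge0.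
have hfin tau : (\int[P]_x (f tau (X tau x))%:E)%E \is a fin_num.
  by rewrite /f /X; case: eqP => _; rewrite (@mgf_Y _ _ _ P _ (hYmeas _ _ _) _ _ (lam0 _ _) (hYnorm _ _ _)).
have uJ : uniq (J ++ [::]).
  rewrite cats0 cat_uniq !map_inj_uniq ?iota_uniq //; last 2 first.
    by move=> r1 r2 [].
    by move=> r1 r2 [].
  rewrite andbT /=; apply/hasPn => tau /mapP [r _ ->]; apply/mapP => -[r' _ [e _]].
  by move: hij; rewrite e eqxx.
under eq_integral do rewrite ident.
rewrite (@indep_prod _ _ _ P _ X (fun tau => hYmeas _ _ _) hYind f f0 mf hfin J [::]
  (fun _ => setT) uJ (fun _ => measurableT)).
rewrite big_nil mule1 big_cat !big_map /= /f /X /= eqxx hji.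
under eq_bigr do rewrite (@mgf_Y _ _ _ P _ (hYmeas _ _ _) _ _ (lam0 _ _) (hYnorm _ _ _)).
under [X in (_ * X)%E]eq_bigr do rewrite (@mgf_Y _ _ _ P _ (hYmeas _ _ _) _ _ (lam0 _ _) (hYnorm _ _ _)).
rewrite !prodEFin !prod_iota_const -!expRM_natl -EFinM -expRD lee_fin.
have Ni0' : Ni%:R != 0 :> R by rewrite pnatr_eq0 -lt0n.
have Nj0' : Nj%:R != 0 :> R by rewrite pnatr_eq0 -lt0n.
rewrite le_eqVlt; apply/orP; left; apply/eqP; congr expR.
by field; rewrite Ni0' Nj0'.
Qed.

Lemma meas_le d (T : measurableType d) (R : realType) (f g : T -> R)
  (mf : measurable_fun setT f) (mg : measurable_fun setT g) :
  measurable [set w | (f w <= g w)%R].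
Proof.
have -> : [set w | (f w <= g w)%R] = (fun w => f w - g w) @^-1` `]-oo, 0].
  by apply/seteqP; split => w /=; rewrite in_itv /= subr_le0.
by rewrite -[_ @^-1` _]setTI; apply: measurable_funB.
Qed.

Theorem proposition1
  (R : realType) (k B : nat) (hk : (2 <= k)%N)
  (pB : 'I_B -> R) (hp0 : forall b, 0 <= pB b) (hp1 : \sum_(b < B) pB b = 1)
  (y lam : 'I_k -> 'I_B -> R) (hlam : forall i b, 0 < lam i b)
  (ib : 'I_B -> 'I_k)
  (hib : forall b (j : 'I_k), j != ib b -> y (ib b) b < y j b)
  (d : measure_display) (T : measurableType d) (P : probability T R)
  (Y : 'I_k -> 'I_B -> nat -> T -> R)
  (hYmeas : forall i b r, measurable_fun setT (Y i b r))
  (hYnorm : forall i b r (A : set R), measurable A ->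
     P (Y i b r @^-1` A) = normal_prob (y i b) (lam i b) A)
  (hYind : mutually_independent P (fun t : 'I_k * 'I_B * nat => Y t.1.1 t.1.2 t.2))
  (alpha : 'I_k -> 'I_B -> R) (ha0 : forall i b, 0 <= alpha i b)
  (ha1 : \sum_(i < k) \sum_(b < B) alpha i b = 1)
  (N : nat -> 'I_k -> 'I_B -> nat)
  (hNfrac : forall i b, (fun n : nat => ((N n i b)%:R / n%:R : R)) @ \oo --> (alpha i b))
  (hNinf : forall i b, (fun n : nat => N n i b) @ \oo --> \oo)
  (b : 'I_B) (i : 'I_k) (hi : i != ib b) :
  ((Grate y lam alpha (ib b) i b)%:E <=
  limn_einf (rate_seq (fun n =>
     P [set w | forall j : 'I_k,
          (sample_mean (Y i b) (N n i b) w <= sample_mean (Y j b) (N n j b) w)%R])))%E.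
Proof.
have mm (i' : 'I_k) M : measurable_fun setT (sample_mean (Y i' b) M).
  rewrite /sample_mean; apply: measurable_funM => //; exact: measurable_sum.
set E := fun n => [set w | forall j : 'I_k,
          (sample_mean (Y i b) (N n i b) w <= sample_mean (Y j b) (N n j b) w)%R].
have mE n : measurable (E n).
  have -> : E n = \bigcap_(j in setT) [set w |
      (sample_mean (Y i b) (N n i b) w <= sample_mean (Y j b) (N n j b) w)%R].
    by apply/seteqP; split => w /= h j; [move=> _; exact: h | exact: h].
  apply: fin_bigcap_measurable; first exact: finite_finset.
  by move=> j _; apply: meas_le.
set u := rate_seq _.
have u0 n : (0 <= u n)%E.
  rewrite /u /rate_seq; apply: mule_ge0; first by rewrite lee_fin invr_ge0.
  rewrite /neglog; case: ifPn => // p0; rewrite lee_fin oppr_ge0; apply: ln_le0.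
  have := probability_le1 P (mE n) => /(fine_le _ _); apply => //.
  by rewrite fin_num_measure.
rewrite /Grate; case: ifPn => [_|/norP [ai0 aj0]].
  apply: (@einf_ge _ _ (fun _ => 0%E)); first exact: cvg_cst.
  by near=> n; exact: u0.
set j0 := ib b.
set δ := y i b - y j0 b.
have δ0 : 0 < δ by rewrite subr_gt0 hib.
have ai : 0 < alpha i b by rewrite lt0r ai0 ha0.
have aj : 0 < alpha j0 b by rewrite lt0r aj0 ha0.
pose g n := δ ^+ 2 / (2 * (lam i b ^+ 2 / ((N n i b)%:R / n%:R) +
                           lam j0 b ^+ 2 / ((N n j0 b)%:R / n%:R))).
apply: (@einf_ge _ _ (fun n => (g n)%:E)).
  apply: cvg_EFin; first by near=> n.
  have -> : (fine \o (fun n => (g n)%:E)) = g by apply/funext.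
  rewrite /g.
  have vl0 : 2 * (lam i b ^+ 2 / alpha i b + lam j0 b ^+ 2 / alpha j0 b) != 0.
    apply: lt0r_neq0; rewrite mulr_gt0 // addr_gt0 // divr_gt0 // exprn_gt0 //.
  apply: cvgM; first exact: cvg_cst.
  apply: cvgV => //.
  apply: cvgM; first exact: cvg_cst.
  apply: cvgD; (apply: cvgM; first exact: cvg_cst); apply: cvgV.
  - by rewrite gt_eqF.
  - exact: hNfrac.
  - by rewrite gt_eqF.
  - exact: hNfrac.
have h1 : \forall n \near \oo, (0 < N n i b)%N.
  apply: (hNinf i b [set m | (0 < m)%N]); by exists 1%N.
have h2 : \forall n \near \oo, (0 < N n j0 b)%N.
  apply: (hNinf j0 b [set m | (0 < m)%N]); by exists 1%N.
near=> n.
have Ni0 : (0 < N n i b)%N by near: n.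
have Nj0 : (0 < N n j0 b)%N by near: n.
have n0 : (0 < n)%N by near: n; exists 1%N.
rewrite /u /rate_seq /neglog; case: eqP => [p0|p0].
  by rewrite muleC gt0_mulye ?leey // lte_fin invr_gt0 ltr0n.
rewrite -EFinM lee_fin.
set Ni := N n i b; set Nj := N n j0 b.
set v := lam i b ^+ 2 / Ni%:R + lam j0 b ^+ 2 / Nj%:R.
have Ni0' : Ni%:R != 0 :> R by rewrite pnatr_eq0 -lt0n.
have Nj0' : Nj%:R != 0 :> R by rewrite pnatr_eq0 -lt0n.
have n0' : n%:R != 0 :> R by rewrite pnatr_eq0 -lt0n.
have v0 : 0 < v.
  by rewrite /v addr_gt0 // divr_gt0 ?exprn_gt0 ?ltr0n.
have cb := @chernoff _ _ _ P _ _ y lam hlam Y hYmeas hYnorm hYind b i j0 hi _ _ Ni0 Nj0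
  (δ / v) (ltW (divr_gt0 δ0 v0)).
have ex : - (δ / v) * δ + (δ / v) ^+ 2 * v / 2 = - (δ ^+ 2 / (2 * v)).
  by field; rewrite gt_eqF.
rewrite -/δ -/v ex in cb.
have sub : (P (E n) <= P [set w | (sample_mean (Y i b) Ni w <= sample_mean (Y j0 b) Nj w)%R])%E.
  apply: le_measure; rewrite ?inE; [exact: mE | exact: meas_le | move=> w /= h; exact: h].
have bound : fine (P (E n)) <= expR (- (δ ^+ 2 / (2 * v))).
  have := le_trans sub cb; move/(fine_le _ _); apply => //.
  by rewrite fin_num_measure.
have pE0 : 0 < fine (P (E n)).
  rewrite lt0r; apply/andP; split; first by apply/eqP.
  by rewrite fine_ge0.
have lnb : ln (fine (P (E n))) <= - (δ ^+ 2 / (2 * v)).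
  by rewrite -(expRK (- (δ ^+ 2 / (2 * v)))) ler_ln ?posrE ?expR_gt0.
have gE : g n = n%:R^-1 * (δ ^+ 2 / (2 * v)).
  rewrite /g /v -/Ni -/Nj; field.
  have Nip : (0 < Ni%:R :> R) by rewrite ltr0n.
  have Njp : (0 < Nj%:R :> R) by rewrite ltr0n.
  have np : (0 < n%:R :> R) by rewrite ltr0n.
  rewrite Ni0' Nj0' n0' /=; apply/andP; split; apply: lt0r_neq0; apply: addr_gt0;
    by rewrite ?mulr_gt0 ?exprn_gt0 ?hlam.
rewrite gE ler_wpM2l ?invr_ge0 ?ler0n // lerNr.
exact: lnb.
Unshelve. all: end_near.
Qed.
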